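(* Let $T=0$, let $\epsilon>0$ be admissible, and let $\mathbf X^{(\epsilon)}(t)=(X_0(t),\dots,X_{n_\epsilon-1}(t))$ be the continuous-time Markov chain on $\mathbb N^{n_\epsilon}$ defined in the context. If $$\lambda<\frac{C}{L\ln(2)\int_{\mathbf S} l_\epsilon(x,0)\,dx}=\frac{C}{L\ln(2)\,\epsilon^2\sum_{k=0}^{n_\epsilon-1}l_\epsilon(a_k,0)},$$ then $\mathbf X^{(\epsilon)}(t)$ is ergodic (positive recurrent).
   Context: Setting ($T=0$). $\mathbf S=[-Q,Q]^2$ with opposite edges identified (flat torus), torus distance $\|\cdot\|$. Path-loss $l:[0,\infty)\to[0,\infty)$ bounded, non-increasing, $l(0)=1$; noise $\mathcal N_0>0$; constants $C>0$, $L>0$, $\lambda>0$. Discretization: $\epsilon>0$ is admissible if $2Q/\epsilon$ is an integer; tessellate $\mathbf S$ into $n_\epsilon=(2Q/\epsilon)^2$ squares $A_0,\dots,A_{n_\epsilon-1}$ of side $\epsilon$ with centers $a_i$ and $a_0=0$. Define $l_\epsilon(a_i,a_j)=\sup\{l(\|b-b'\|): b\in\overline{A_i},\,b'\in\overline{A_j}\}$ and, for $x\in A_i$, $y\in A_j$, $l_\epsilon(x,y)=l_\epsilon(a_i,a_j)$. The chain $\mathbf X^{(\epsilon)}$ on $\mathbb N^{n_\epsilon}$ (the cell-count process of the discretized birth–death dynamics) has transitions: for each $i$, $X_i\to X_i+1$ at rate $\lambda\epsilon^2$, and $X_i\to X_i-1$ at rate $\frac{C}{L}X_i\log_2\!\Big(1+\frac{1}{\mathcal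 N_0+\sum_{j=0}^{n_\epsilon-1}(X_j-\mathbf 1\{j=i\})\,l_\epsilon(a_i,a_j)}\Big)$. *)

(* Defs.v *)
From Stdlib Require Import Reals Lra List Arith ZArith.
Import ListNotations.
Open Scope R_scope.

(* distance from t to the nearest point of 2Q*Z, i.e. min_{k in Z} |t - 2Qk| *)
Definition circ_dist (Q t : R) : R :=
  let r := t / (2 * Q) - IZR (Int_part (t / (2 * Q))) in
  2 * Q * Rmin r (1 - r).

Definition torus_dist (Q : R) (x y : R * R) : R :=
  sqrt (circ_dist Q (fst x - fst y) ^ 2 + circ_dist Q (snd x - snd y) ^ 2).

(* Tessellation: m = 2Q/eps squares per side, n_eps = m*m cells.
   Cell i (i < m*m) has center a_i = ((i / m) eps, (i mod m) eps) (mod 2Q),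
   so a_0 = 0. *)
Definition center (eps : R) (m i : nat) : R * R :=
  (INR (i / m)%nat * eps, INR (i mod m)%nat * eps).

Definition in_closed_cell (eps : R) (m i : nat) (b : R * R) : Prop :=
  exists u v, Rabs u <= eps / 2 /\ Rabs v <= eps / 2 /\
    b = (fst (center eps m i) + u, snd (center eps m i) + v).

(* the set { l(||b-b'||) : b in cl A_i, b' in cl A_j }; l_eps(a_i,a_j) is its sup *)
Definition leps_set (l : R -> R) (Q eps : R) (m i j : nat) (r : R) : Prop :=
  exists b b', in_closed_cell eps m i b /\ in_closed_cell eps m j b' /\
    r = l (torus_dist Q b b').

(** * The Markov chain X^(eps) on N^{n_eps} (states = lists of length n) *)

Definition state := list nat.

Fixpoint upd (f : nat -> nat) (i : nat) (s : state) : state :=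
  match s, i with
  | [], _ => []
  | x :: t, O => f x :: t
  | x :: t, S i' => x :: upd f i' t
  end.

Definition rsum (f : nat -> R) (n : nat) : R := fold_right Rplus 0 (map f (seq 0 n)).

Definition log2 (x : R) : R := ln x / ln 2.

Definition interf (le : nat -> nat -> R) (n i : nat) (s : state) : R :=
  rsum (fun j => (INR (nth j s O) - (if Nat.eqb j i then 1 else 0)) * le i j) n.

Definition death_rate (C L N0 : R) (le : nat -> nat -> R) (n i : nat) (s : state) : R :=
  C / L * INR (nth i s O) * log2 (1 + 1 / (N0 + interf le n i s)).

(* list of (rate, target) transitions out of s: births X_i -> X_i+1 at rate
   lam eps^2, deaths X_i -> X_i-1 at the death rate (which is 0 when X_i = 0) *)
Definition moves (lam eps C L N0 : R) (le : nat -> nat -> R) (n : nat) (s : state)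
  : list (R * state) :=
  flat_map (fun i => [(lam * eps ^ 2, upd S i s);
                      (death_rate C L N0 le n i s, upd Nat.pred i s)]) (seq 0 n).

Definition qtot (mv : state -> list (R * state)) (s : state) : R :=
  fold_right (fun p a => fst p + a) 0 (mv s).

Definition state_eqb (x y : state) : bool :=
  if list_eq_dec Nat.eq_dec x y then true else false.

(* P_y(first hitting time of x, counted in jumps, = k) *)
Fixpoint hit_prob (mv : state -> list (R * state)) (x : state) (k : nat) (y : state) : R :=
  match k with
  | O => if state_eqb y x then 1 else 0
  | S k' => if state_eqb y x then 0 else
      fold_right (fun p a => fst p / qtot mv y * hit_prob mv x k' (snd p) + a) 0 (mv y)
  end.

(* E_y[ tau_x ; jumps to hit x = k ]  where tau_x is the continuous hitting time *)
Fixpoint hit_time (mv : state -> list (R * state)) (x : state) (k : nat) (y : state) : R :=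
  match k with
  | O => 0
  | S k' => if state_eqb y x then 0 else
      fold_right (fun p a => fst p / qtot mv y *
        (hit_time mv x k' (snd p) + hit_prob mv x k' (snd p) / qtot mv y) + a) 0 (mv y)
  end.

(* P_x(first return to x happens at jump k) *)
Definition ret_prob (mv : state -> list (R * state)) (x : state) (k : nat) : R :=
  match k with
  | O => 0
  | S k' => fold_right (fun p a => fst p / qtot mv x * hit_prob mv x k' (snd p) + a) 0 (mv x)
  end.

(* E_x[ return time tau_x^+ ; return at jump k ] *)
Definition ret_time (mv : state -> list (R * state)) (x : state) (k : nat) : R :=
  match k with
  | O => 0
  | S k' => fold_right (fun p a => fst p / qtot mv x *
        (hit_time mv x k' (snd p) + hit_prob mv x k' (snd p) / qtot mv x) + a) 0 (mv x)
  end.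

Inductive reach (mv : state -> list (R * state)) : state -> state -> Prop :=
  | reach_refl x : reach mv x x
  | reach_step x z y r : In (r, z) (mv x) -> 0 < r -> reach mv z y -> reach mv x y.

Definition irreducible (mv : state -> list (R * state)) (n : nat) : Prop :=
  forall x y, length x = n -> length y = n -> reach mv x y.

Definition positive_recurrent (mv : state -> list (R * state)) (n : nat) : Prop :=
  forall x, length x = n ->
    infinite_sum (ret_prob mv x) 1 /\ exists T, infinite_sum (ret_time mv x) T.

Definition ergodic (mv : state -> list (R * state)) (n : nat) : Prop :=
  irreducible mv n /\ positive_recurrent mv n.

(* Main.v *)
Require Import Defs.
From Stdlib Require Import Reals Lra Lia List Arith ZArith Permutation Classical.
Import ListNotations.
Open Scope R_scope.


Definition ls (g : R * state -> R) (l : list (R * state)) : R :=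
  fold_right (fun p a => g p + a) 0 l.

Lemma ls_plus f g l : ls (fun p => f p + g p) l = ls f l + ls g l.
Proof. induction l; simpl; [lra|]. unfold ls in *; simpl. rewrite IHl. lra. Qed.

Lemma ls_scal c f l : ls (fun p => c * f p) l = c * ls f l.
Proof. induction l; unfold ls in *; simpl; [lra|]. rewrite IHl. lra. Qed.

Lemma ls_le f g l : (forall p, In p l -> f p <= g p) -> ls f l <= ls g l.
Proof.
  induction l; intros H; unfold ls in *; simpl; [lra|].
  assert (f a <= g a) by (apply H; left; auto).
  assert (fold_right (fun p a => f p + a) 0 l <= fold_right (fun p a => g p + a) 0 l)
    by (apply IHl; intros; apply H; right; auto). lra.
Qed.

Lemma ls_ext f g l : (forall p, In p l -> f p = g p) -> ls f l = ls g l.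
Proof.
  intros H; apply Rle_antisym; apply ls_le; intros p Hp; rewrite (H p Hp); lra.
Qed.

Lemma ls_nonneg f l : (forall p, In p l -> 0 <= f p) -> 0 <= ls f l.
Proof. intros H. replace 0 with (ls (fun _ => 0) l). apply ls_le; auto.
  clear; induction l; unfold ls in *; simpl; try rewrite IHl; lra. Qed.

Lemma sum_shift f K : sum_f_R0 f (S K) = f 0%nat + sum_f_R0 (fun k => f (S k)) K.
Proof. induction K; simpl in *; [lra|]. rewrite IHK. lra. Qed.

Lemma ls_sum_mul (c : R * state -> R) (f : nat -> R * state -> R) l K :
  sum_f_R0 (fun k => ls (fun p => c p * f k p) l) K =
  ls (fun p => c p * sum_f_R0 (fun k => f k p) K) l.
Proof.
  induction l; unfold ls in *; simpl.
  - rewrite sum_cte. lra.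
  - rewrite sum_plus. rewrite IHl. rewrite scal_sum. f_equal.
    apply sum_eq; intros; lra.
Qed.

Lemma sum_zero K : sum_f_R0 (fun _ => 0) K = 0.
Proof. rewrite sum_cte. lra. Qed.

Lemma state_eqb_refl x : state_eqb x x = true.
Proof. unfold state_eqb. destruct (list_eq_dec Nat.eq_dec x x); congruence. Qed.

Lemma state_eqb_true x y : state_eqb y x = true -> y = x.
Proof. unfold state_eqb. destruct (list_eq_dec Nat.eq_dec y x); congruence. Qed.

Lemma state_eqb_false x y : state_eqb y x = false -> y <> x.
Proof. unfold state_eqb. destruct (list_eq_dec Nat.eq_dec y x); congruence. Qed.

Section Abs.
End Abs.

Definition Pk (mv : state -> list (R * state)) (x : state) (h : state -> R) (y : state) : R :=
  if state_eqb y x then 0 else ls (fun p => fst p / qtot mv y * h (snd p)) (mv y).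

Fixpoint U mv x (K : nat) : state -> R :=
  match K with O => fun _ => 1 | S K' => Pk mv x (U mv x K') end.

Definition RatesOK (mv : state -> list (R * state)) :=
  (forall s p, In p (mv s) -> 0 <= fst p) /\ (forall s, 0 < qtot mv s).

Lemma qtot_ls mv s : qtot mv s = ls fst (mv s).
Proof. reflexivity. Qed.

Lemma ls_prob mv y : 0 < qtot mv y -> ls (fun p => fst p / qtot mv y) (mv y) = 1.
Proof.
  intros Hq. transitivity (/ qtot mv y * ls fst (mv y)).
  - rewrite <- ls_scal. apply ls_ext. intros; unfold Rdiv; lra.
  - rewrite <- qtot_ls. field. lra.
Qed.

Lemma ls_prob_mul mv y c : 0 < qtot mv y -> ls (fun p => fst p / qtot mv y * c) (mv y) = c.
Proof.
  intros Hq. transitivity (c * ls (fun p => fst p / qtot mv y) (mv y)).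
  - rewrite <- ls_scal. apply ls_ext. intros; lra.
  - rewrite ls_prob; auto; lra.
Qed.

Lemma coef_nonneg mv y p : RatesOK mv -> In p (mv y) -> 0 <= fst p / qtot mv y.
Proof. intros [Hr Hq] Hp. unfold Rdiv. apply Rmult_le_pos; [apply Hr with y; auto|].
  left; apply Rinv_0_lt_compat; auto. Qed.

Lemma Pk_mono mv x f g y : RatesOK mv ->
  (forall p, In p (mv y) -> f (snd p) <= g (snd p)) -> Pk mv x f y <= Pk mv x g y.
Proof.
  intros HR H. unfold Pk. destruct (state_eqb y x); [lra|].
  apply ls_le. intros p Hp. apply Rmult_le_compat_l; [eapply coef_nonneg; eauto|auto].
Qed.

Lemma U_bounds mv x K y : RatesOK mv -> 0 <= U mv x K y <= 1.
Proof.
  intros HR. revert y; induction K; intros y; simpl; [lra|].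
  unfold Pk. destruct (state_eqb y x); [lra|]. split.
  - apply ls_nonneg. intros p Hp. apply Rmult_le_pos; [eapply coef_nonneg; eauto|apply IHK].
  - rewrite <- (ls_prob_mul mv y 1) by (apply (proj2 HR)). apply ls_le. intros p Hp.
    apply Rmult_le_compat_l; [eapply coef_nonneg; eauto|apply IHK].
Qed.

Lemma U_x mv x K : U mv x (S K) x = 0.
Proof. simpl. unfold Pk. rewrite state_eqb_refl. auto. Qed.

Lemma U_dec mv x K y : RatesOK mv -> U mv x (S K) y <= U mv x K y.
Proof.
  intros HR. revert y; induction K; intros y.
  - apply U_bounds; auto.
  - simpl. apply Pk_mono; auto. intros; apply IHK.
Qed.

Lemma U_anti mv x k K y : RatesOK mv -> (k <= K)%nat -> U mv x K y <= U mv x k y.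
Proof.
  intros HR Hk. induction Hk; [lra|]. eapply Rle_trans; [apply U_dec; auto|auto].
Qed.

Lemma hp_sum mv x K y : RatesOK mv ->
  sum_f_R0 (fun k => hit_prob mv x k y) K = 1 - U mv x (S K) y.
Proof.
  intros HR. revert y; induction K; intros y.
  - simpl. unfold Pk. destruct (state_eqb y x); [lra|].
    rewrite ls_prob_mul by apply (proj2 HR). lra.
  - rewrite sum_shift. simpl (hit_prob mv x 0 y).
    destruct (state_eqb y x) eqn:E.
    + rewrite (sum_eq _ (fun _ => 0)) by (intros; simpl; rewrite E; auto).
      rewrite sum_zero. simpl. unfold Pk. rewrite E. lra.
    + rewrite (sum_eq _ (fun k => ls (fun p => fst p / qtot mv y * hit_prob mv x k (snd p)) (mv y)))
        by (intros; simpl; rewrite E; auto).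
      rewrite (ls_sum_mul (fun p => fst p / qtot mv y) (fun k p => hit_prob mv x k (snd p))).
      rewrite (ls_ext _ (fun p => fst p / qtot mv y * 1 + (-1) * (fst p / qtot mv y * U mv x (S K) (snd p))))
        by (intros; rewrite IHK; lra).
      rewrite ls_plus, ls_scal, ls_prob_mul by apply (proj2 HR).
      change (U mv x (S (S K)) y) with (Pk mv x (U mv x (S K)) y). unfold Pk. rewrite E. lra.
Qed.

Lemma hp_nonneg mv x k y : RatesOK mv -> 0 <= hit_prob mv x k y.
Proof.
  intros HR. revert y; induction k; intros y; simpl; destruct (state_eqb y x); try lra.
  apply ls_nonneg. intros p Hp. apply Rmult_le_pos; [eapply coef_nonneg; eauto|apply IHk].
Qed.

Lemma ht_nonneg mv x k y : RatesOK mv -> 0 <= hit_time mv x k y.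
Proof.
  intros HR. revert y; induction k; intros y; simpl; try lra. destruct (state_eqb y x); try lra.
  apply ls_nonneg. intros p Hp. apply Rmult_le_pos; [eapply coef_nonneg; eauto|].
  apply Rplus_le_le_0_compat; [apply IHk|]. unfold Rdiv. apply Rmult_le_pos; [apply hp_nonneg; auto|].
  left; apply Rinv_0_lt_compat; apply (proj2 HR).
Qed.

Definition SU mv x K y := sum_f_R0 (fun k => U mv x k y) K.

Lemma SU_step mv x K y : SU mv x (S K) y = 1 + Pk mv x (SU mv x K) y.
Proof.
  unfold SU. rewrite sum_shift. simpl (U mv x 0 y). f_equal.
  unfold Pk. destruct (state_eqb y x) eqn:E.
  - rewrite (sum_eq _ (fun _ => 0)) by (intros; simpl; unfold Pk; rewrite E; auto).
    apply sum_zero.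
  - rewrite (sum_eq _ (fun k => ls (fun p => fst p / qtot mv y * U mv x k (snd p)) (mv y)))
        by (intros; simpl; unfold Pk; rewrite E; auto).
    apply ls_sum_mul.
Qed.

Lemma SU_nonneg mv x K y : RatesOK mv -> 0 <= SU mv x K y.
Proof. intros HR. unfold SU. apply cond_pos_sum. intros; apply U_bounds; auto. Qed.

Lemma HT_bound mv x qmin K y : RatesOK mv -> 0 < qmin -> (forall s, qmin <= qtot mv s) ->
  sum_f_R0 (fun k => hit_time mv x k y) K <= SU mv x K y / qmin.
Proof.
  intros HR Hqm Hq. revert y; induction K; intros y.
  - simpl. unfold SU; simpl. apply Rmult_le_pos; [lra|left; apply Rinv_0_lt_compat; auto].
  - rewrite sum_shift. simpl (hit_time mv x 0 y). rewrite SU_step.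
    destruct (state_eqb y x) eqn:E.
    + rewrite (sum_eq _ (fun _ => 0)) by (intros; simpl; rewrite E; auto).
      rewrite sum_zero. unfold Pk; rewrite E. unfold Rdiv. 
      assert (0 < /qmin) by (apply Rinv_0_lt_compat; auto). nra.
    + rewrite (sum_eq _ (fun k => ls (fun p => fst p / qtot mv y *
          (hit_time mv x k (snd p) + hit_prob mv x k (snd p) / qtot mv y)) (mv y)))
        by (intros; simpl; rewrite E; auto).
      rewrite (ls_sum_mul (fun p => fst p / qtot mv y)
         (fun k p => hit_time mv x k (snd p) + hit_prob mv x k (snd p) / qtot mv y)).
      assert (Hq' : 0 < qtot mv y) by apply (proj2 HR).
      rewrite Rplus_0_l.
      apply Rle_trans with (ls (fun p => fst p / qtot mv y * (SU mv x K (snd p) / qmin)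
                 + (/ qtot mv y) * (fst p / qtot mv y)) (mv y)).
      * apply ls_le. intros p Hp. rewrite sum_plus.
        assert (Hc := coef_nonneg mv y p HR Hp).
        assert (H1 := IHK (snd p)).
        assert (H2 : sum_f_R0 (fun k => hit_prob mv x k (snd p) / qtot mv y) K <= / qtot mv y).
        { rewrite (sum_eq _ (fun k => hit_prob mv x k (snd p) * / qtot mv y)) by (intros; reflexivity).
          rewrite <- scal_sum. rewrite hp_sum by auto.
          assert (0 <= U mv x (S K) (snd p)) by (apply U_bounds; auto).
          assert (0 < / qtot mv y) by (apply Rinv_0_lt_compat; auto). nra. }
        nra.
      * rewrite ls_plus, ls_scal, ls_prob by auto.
        unfold Pk; rewrite E.
        rewrite (ls_ext (fun p => fst p / qtot mv y * (SU mv x K (snd p) / qmin))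
                   (fun p => / qmin * (fst p / qtot mv y * SU mv x K (snd p)))) by (intros; unfold Rdiv; lra).
        rewrite ls_scal.
        assert (/ qtot mv y <= / qmin) by (apply Rinv_le_contravar; auto).
        unfold Rdiv. lra.
Qed.

Lemma SU_W mv x n (W : state -> R) K y : RatesOK mv ->
  (forall s p, length s = n -> In p (mv s) -> length (snd p) = n) ->
  (forall y, length y = n -> 1 <= W y) ->
  (forall y, length y = n -> state_eqb y x = false -> Pk mv x W y <= W y - 1) ->
  length y = n -> SU mv x K y <= W y.
Proof.
  intros HR Hlen HW1 HW. revert y; induction K; intros y Hy.
  - unfold SU; simpl. auto.
  - rewrite SU_step. destruct (state_eqb y x) eqn:E.
    + unfold Pk; rewrite E. specialize (HW1 y Hy). lra.
    + specialize (HW y Hy E). assert (Pk mv x (SU mv x K) y <= Pk mv x W y).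
      { apply Pk_mono; auto. intros p Hp. apply IHK. eapply Hlen; eauto. }
      lra.
Qed.

Lemma U_W mv x n (W : state -> R) K y : RatesOK mv ->
  (forall s p, length s = n -> In p (mv s) -> length (snd p) = n) ->
  (forall y, length y = n -> 1 <= W y) ->
  (forall y, length y = n -> state_eqb y x = false -> Pk mv x W y <= W y - 1) ->
  length y = n -> U mv x K y <= W y / INR (S K).
Proof.
  intros HR Hlen HW1 HW Hy.
  assert (H := SU_W mv x n W K y HR Hlen HW1 HW Hy).
  assert (U mv x K y * INR (S K) <= SU mv x K y).
  { unfold SU. rewrite <- sum_cte. apply sum_Rle. intros; apply U_anti; auto. }
  assert (0 < INR (S K)) by (apply lt_0_INR; lia).
  apply Rmult_le_reg_r with (INR (S K)); auto. unfold Rdiv. rewrite Rmult_assoc, Rinv_l by lra. lra.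
Qed.

Theorem abstract_pr mv x n (W : state -> R) qmin : RatesOK mv ->
  0 < qmin -> (forall s, qmin <= qtot mv s) ->
  (forall s p, length s = n -> In p (mv s) -> length (snd p) = n) ->
  (forall y, length y = n -> 1 <= W y) ->
  (forall y, length y = n -> state_eqb y x = false -> Pk mv x W y <= W y - 1) ->
  length x = n ->
  infinite_sum (ret_prob mv x) 1 /\ exists T, infinite_sum (ret_time mv x) T.
Proof.
  intros HR Hqm Hq Hlen HW1 HW Hx.
  assert (Hqx : 0 < qtot mv x) by apply (proj2 HR).
  set (Cx := ls (fun p => fst p / qtot mv x * W (snd p)) (mv x)).
  assert (Hpart : forall K, sum_f_R0 (ret_prob mv x) (S K) =
     1 - ls (fun p => fst p / qtot mv x * U mv x (S K) (snd p)) (mv x)).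
  { intros K. rewrite sum_shift. simpl (ret_prob mv x 0).
    rewrite (sum_eq _ (fun k => ls (fun p => fst p / qtot mv x * hit_prob mv x k (snd p)) (mv x)))
      by (intros; reflexivity).
    rewrite (ls_sum_mul (fun p => fst p / qtot mv x) (fun k p => hit_prob mv x k (snd p))).
    rewrite (ls_ext _ (fun p => fst p / qtot mv x * 1 + (-1) * (fst p / qtot mv x * U mv x (S K) (snd p))))
        by (intros; rewrite hp_sum by auto; lra).
    rewrite ls_plus, ls_scal, ls_prob_mul by auto. lra. }
  assert (Hb : forall K, 0 <= ls (fun p => fst p / qtot mv x * U mv x (S K) (snd p)) (mv x)
                     <= Cx / INR (S (S K))).
  { intros K. split.
    - apply ls_nonneg. intros p Hp. apply Rmult_le_pos; [eapply coef_nonneg; eauto|apply U_bounds; auto].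
    - unfold Cx. unfold Rdiv. rewrite Rmult_comm, <- ls_scal. apply ls_le. intros p Hp.
      assert (Hc := coef_nonneg mv x p HR Hp).
      assert (H := U_W mv x n W (S K) (snd p) HR Hlen HW1 HW (Hlen _ _ Hx Hp)).
      unfold Rdiv in H. nra. }
  assert (HC0 : 0 <= Cx).
  { unfold Cx. apply ls_nonneg. intros p Hp. apply Rmult_le_pos; [eapply coef_nonneg; eauto|].
    assert (H := HW1 _ (Hlen _ _ Hx Hp)). lra. }
  split.
  - intros e He. destruct (archimed (Cx / e)) as [Ha _].
    exists (S (Z.to_nat (up (Cx / e)))). intros k Hk. destruct k as [|K]; [lia|].
    rewrite Hpart. unfold Rdist. specialize (Hb K).
    assert (IZR (up (Cx / e)) <= INR (S (S K))).
    { assert (0 <= IZR (up (Cx/e))).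
      { apply Rle_trans with (Cx / e); [|lra]. unfold Rdiv. apply Rmult_le_pos; auto.
        left; apply Rinv_0_lt_compat; auto. }
      assert (0 <= up (Cx/e))%Z by (apply le_IZR; auto).
      rewrite <- (Z2Nat.id (up (Cx/e))) by auto. rewrite <- INR_IZR_INZ. apply le_INR. lia. }
    assert (Cx / e < INR (S (S K))) by lra.
    assert (0 < INR (S (S K))) by (apply lt_0_INR; lia).
    assert (Cx / INR (S (S K)) < e).
    { apply Rmult_lt_reg_r with (INR (S (S K))); auto. unfold Rdiv.
      rewrite Rmult_assoc, Rinv_l by lra. 
      apply Rmult_lt_reg_r with (/ e). apply Rinv_0_lt_compat; auto.
      rewrite Rinv_r_simpl_m by lra. lra. }
    rewrite Rabs_left1; lra.
  - set (Bx := ls (fun p => fst p / qtot mv x * (W (snd p) / qmin + / qtot mv x)) (mv x)).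
    assert (Hbd : forall k, sum_f_R0 (ret_time mv x) k <= Bx).
    { assert (0 <= Bx).
      { unfold Bx. apply ls_nonneg. intros p Hp. apply Rmult_le_pos; [eapply coef_nonneg; eauto|].
        assert (H := HW1 _ (Hlen _ _ Hx Hp)).
        assert (0 < /qmin) by (apply Rinv_0_lt_compat; auto).
        assert (0 < /qtot mv x) by (apply Rinv_0_lt_compat; auto). unfold Rdiv; nra. }
      intros [|K]; [simpl; lra|].
      rewrite sum_shift. simpl (ret_time mv x 0).
      rewrite (sum_eq _ (fun k => ls (fun p => fst p / qtot mv x *
          (hit_time mv x k (snd p) + hit_prob mv x k (snd p) / qtot mv x)) (mv x)))
        by (intros; reflexivity).
      rewrite (ls_sum_mul (fun p => fst p / qtot mv x)
         (fun k p => hit_time mv x k (snd p) + hit_prob mv x k (snd p) / qtot mv x)).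
      rewrite Rplus_0_l. unfold Bx. apply ls_le. intros p Hp.
      apply Rmult_le_compat_l; [eapply coef_nonneg; eauto|].
      rewrite sum_plus.
      assert (H1 := HT_bound mv x qmin K (snd p) HR Hqm Hq).
      assert (H3 := SU_W mv x n W K (snd p) HR Hlen HW1 HW (Hlen _ _ Hx Hp)).
      assert (H2 : sum_f_R0 (fun k => hit_prob mv x k (snd p) / qtot mv x) K <= / qtot mv x).
      { rewrite (sum_eq _ (fun k => hit_prob mv x k (snd p) * / qtot mv x)) by (intros; reflexivity).
        rewrite <- scal_sum. rewrite hp_sum by auto.
        assert (0 <= U mv x (S K) (snd p)) by (apply U_bounds; auto).
        assert (0 < / qtot mv x) by (apply Rinv_0_lt_compat; auto). nra. }
      assert (SU mv x K (snd p) / qmin <= W (snd p) / qmin).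
      { unfold Rdiv. apply Rmult_le_compat_r; auto. left; apply Rinv_0_lt_compat; auto. }
      lra. }
    destruct (Un_cv_crit (sum_f_R0 (ret_time mv x))) as [T HT].
    + intros k. change (sum_f_R0 (ret_time mv x) (S k)) with (sum_f_R0 (ret_time mv x) k + ret_time mv x (S k)).
      assert (0 <= ret_time mv x (S k)); [|lra].
      simpl. apply ls_nonneg. intros p Hp. apply Rmult_le_pos; [eapply coef_nonneg; eauto|].
      apply Rplus_le_le_0_compat; [apply ht_nonneg; auto|].
      unfold Rdiv; apply Rmult_le_pos; [apply hp_nonneg; auto|left; apply Rinv_0_lt_compat; auto].
    + exists Bx. intros y [k ->]. apply Hbd.
    + exists T. exact HT.
Qed.

Lemma build_W mv x n (V : state -> R) (F : state -> Prop) D J p0 : RatesOK mv ->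
  (forall s p, length s = n -> In p (mv s) -> length (snd p) = n) ->
  (forall y, length y = n -> 0 <= V y) -> 0 <= D -> 0 < p0 ->
  (forall y, length y = n -> ~ F y -> state_eqb y x = false -> Pk mv x V y <= V y - 1) ->
  (forall y, length y = n -> F y -> state_eqb y x = false -> Pk mv x V y <= V y + D) ->
  (forall y, length y = n -> F y -> state_eqb y x = false -> U mv x J y <= 1 - p0) ->
  exists W : state -> R, (forall y, length y = n -> 1 <= W y) /\
     (forall y, length y = n -> state_eqb y x = false -> Pk mv x W y <= W y - 1).
Proof.
  intros HR Hlen HV0 HD Hp0 HV1 HV2 HU.
  set (beta := (D + 1) / p0).
  assert (Hbeta : beta * p0 = D + 1) by (unfold beta; field; lra).
  assert (Hb0 : 0 <= beta) by (unfold beta; unfold Rdiv; apply Rmult_le_pos; [lra|left; apply Rinv_0_lt_compat; auto]).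
  exists (fun z => V z + beta * SU mv x J z + 1). split.
  - intros y Hy. assert (HS := SU_nonneg mv x J y HR). specialize (HV0 y Hy). nra.
  - intros y Hy E.
    assert (Hq : 0 < qtot mv y) by apply (proj2 HR).
    assert (HPk : Pk mv x (fun z => V z + beta * SU mv x J z + 1) y =
                  Pk mv x V y + beta * Pk mv x (SU mv x J) y + 1).
    { unfold Pk; rewrite E.
      rewrite (ls_ext _ (fun p => fst p / qtot mv y * V (snd p) +
           (beta * (fst p / qtot mv y * SU mv x J (snd p)) + fst p / qtot mv y * 1)))
        by (intros; lra).
      rewrite !ls_plus, ls_scal, ls_prob_mul by auto. lra. }
    rewrite HPk.
    assert (HS : Pk mv x (SU mv x J) y = SU mv x J y + U mv x (S J) y - 1).
    { assert (H := SU_step mv x J y).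
      unfold SU in H |- *. change (sum_f_R0 (fun k => U mv x k y) (S J)) with
        (sum_f_R0 (fun k => U mv x k y) J + U mv x (S J) y) in H. lra. }
    rewrite HS. assert (HdJ := U_dec mv x J y HR). assert (HUb := U_bounds mv x J y HR).
    destruct (classic (F y)) as [HF|HF].
    + specialize (HV2 y Hy HF E). specialize (HU y Hy HF E). nra.
    + specialize (HV1 y Hy HF E). nra.
Qed.

Inductive preach (mv : state -> list (R * state)) (d : R) : nat -> state -> state -> Prop :=
 | pr0 x : preach mv d 0 x x
 | prS k y z x r : In (r, z) (mv y) -> d <= r / qtot mv y -> preach mv d k z x ->
     preach mv d (S k) y x.

Lemma ls_split (c f : R * state -> R) l a :
  In a l -> (forall p, In p l -> 0 <= c p) -> (forall p, In p l -> f p <= 1) ->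
  ls (fun p => c p * f p) l <= ls c l - c a * (1 - f a).
Proof.
  induction l as [|b l IH]; intros Ha Hc Hf; [inversion Ha|]. unfold ls in *; simpl.
  assert (Hrest : fold_right (fun p a0 => c p * f p + a0) 0 l <= fold_right (fun p a0 => c p + a0) 0 l).
  { change (ls (fun p => c p * f p) l <= ls c l). apply ls_le. intros p Hp.
    assert (0 <= c p) by (apply Hc; right; auto). assert (f p <= 1) by (apply Hf; right; auto). nra. }
  destruct Ha as [<-|Ha].
  - lra.
  - assert (0 <= c b) by (apply Hc; left; auto). assert (f b <= 1) by (apply Hf; left; auto).
    assert (IH' := IH Ha (fun p Hp => Hc p (or_intror Hp)) (fun p Hp => Hf p (or_intror Hp))).
    nra.
Qed.

Lemma pow_le1 d k : 0 <= d <= 1 -> 0 <= d ^ k <= 1.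
Proof. intros H. induction k; simpl; nra. Qed.

Lemma preach_U mv x d k y : RatesOK mv -> 0 <= d <= 1 -> preach mv d k y x ->
  forall K, (k < K)%nat -> U mv x K y <= 1 - d ^ k.
Proof.
  intros HR Hd Hp. induction Hp; intros K HK.
  - destruct K; [lia|]. rewrite U_x. simpl. lra.
  - destruct K as [|K]; [lia|]. change (U mv x (S K) y) with (Pk mv x (U mv x K) y). unfold Pk.
    assert (Hpw := pow_le1 d (S k) Hd).
    destruct (state_eqb y x) eqn:E; [lra|].
    assert (Hq : 0 < qtot mv y) by apply (proj2 HR).
    eapply Rle_trans.
    + apply (ls_split (fun p => fst p / qtot mv y) (fun p => U mv x K (snd p)) (mv y) (r, z)); auto.
      * intros; eapply coef_nonneg; eauto.
      * intros; apply U_bounds; auto.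
    + rewrite ls_prob by auto. simpl (fst (r, z)). simpl (snd (r,z)).
      assert (IH := IHHp K ltac:(lia)). assert (Hpk := pow_le1 d k Hd). simpl. nra.
Qed.

Lemma preach_reach mv x d k y : RatesOK mv -> 0 < d -> preach mv d k y x -> reach mv y x.
Proof.
  intros HR Hd Hp. induction Hp.
  - constructor.
  - apply reach_step with z r; auto.
    assert (Hq : 0 < qtot mv y) by apply (proj2 HR).
    assert (0 < r / qtot mv y) by lra.
    replace r with (r / qtot mv y * qtot mv y) by (field; lra). nra.
Qed.

Lemma rsum_S f n : rsum f (S n) = rsum f n + f n.
Proof.
  unfold rsum. rewrite seq_S, map_app, fold_right_app. simpl.
  generalize (map f (seq 0 n)). intros l. induction l; simpl; lra.
Qed.

Lemma rsum_0 f : rsum f 0 = 0.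
Proof. reflexivity. Qed.

Lemma rsum_ext f g n : (forall i, (i < n)%nat -> f i = g i) -> rsum f n = rsum g n.
Proof. induction n; intros H; [reflexivity|]. rewrite !rsum_S, IHn, H; auto. Qed.

Lemma rsum_le f g n : (forall i, (i < n)%nat -> f i <= g i) -> rsum f n <= rsum g n.
Proof. induction n; intros H; [unfold rsum; simpl; lra|]. rewrite !rsum_S.
  assert (rsum f n <= rsum g n) by (apply IHn; intros; apply H; lia). specialize (H n ltac:(lia)). lra. Qed.

Lemma rsum_plus f g n : rsum (fun i => f i + g i) n = rsum f n + rsum g n.
Proof. induction n; [unfold rsum; simpl; lra|]. rewrite !rsum_S, IHn. lra. Qed.

Lemma rsum_scal c f n : rsum (fun i => c * f i) n = c * rsum f n.
Proof. induction n; [unfold rsum; simpl; lra|]. rewrite !rsum_S, IHn. lra. Qed.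

Lemma rsum_const c n : rsum (fun _ => c) n = INR n * c.
Proof. induction n; [unfold rsum; simpl; lra|]. rewrite rsum_S, IHn, S_INR. lra. Qed.

Lemma rsum_nonneg f n : (forall i, (i < n)%nat -> 0 <= f i) -> 0 <= rsum f n.
Proof. intros H. replace 0 with (rsum (fun _ => 0) n). apply rsum_le; auto.
  rewrite rsum_const; lra. Qed.

Lemma rsum_delta i a n : (i < n)%nat -> rsum (fun j => if Nat.eqb j i then a else 0) n = a.
Proof.
  induction n; intros H; [lia|]. rewrite rsum_S.
  destruct (Nat.eq_dec i n) as [->|Hne].
  - rewrite Nat.eqb_refl. rewrite (rsum_ext _ (fun _ => 0)).
    + rewrite rsum_const; lra.
    + intros j Hj. destruct (Nat.eqb_spec j n); [lia|auto].
  - rewrite IHn by lia. destruct (Nat.eqb_spec n i); [lia|lra].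
Qed.

Lemma rsum_delta_mul i (g : nat -> R) n : (i < n)%nat ->
  rsum (fun j => (if Nat.eqb j i then 1 else 0) * g j) n = g i.
Proof.
  intros H. rewrite (rsum_ext _ (fun j => if Nat.eqb j i then g i else 0)).
  - apply rsum_delta; auto.
  - intros j Hj. destruct (Nat.eqb_spec j i); subst; lra.
Qed.

Lemma rsum_swap (f : nat -> nat -> R) n m :
  rsum (fun i => rsum (fun j => f i j) m) n = rsum (fun j => rsum (fun i => f i j) n) m.
Proof.
  induction n.
  - rewrite rsum_0. rewrite (rsum_ext (fun j => rsum (fun i => f i j) 0) (fun _ => 0)) by (intros; reflexivity). rewrite rsum_const; lra.
  - rewrite rsum_S, IHn. rewrite <- rsum_plus. apply rsum_ext. intros; rewrite rsum_S; lra.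
Qed.

Fixpoint nsum (f : nat -> nat) (n : nat) : nat :=
  match n with O => O | S n' => (nsum f n' + f n')%nat end.

Lemma rsum_nsum f n : rsum (fun j => INR (f j)) n = INR (nsum f n).
Proof. induction n; [reflexivity|]. rewrite rsum_S, IHn. simpl. rewrite plus_INR. lra. Qed.

Lemma nsum_ext f g n : (forall i, (i < n)%nat -> f i = g i) -> nsum f n = nsum g n.
Proof. induction n; intros H; simpl; [auto|]. rewrite IHn, H; auto. Qed.

Lemma nsum_delta f g i n : (i < n)%nat -> (forall j, (j < n)%nat -> j <> i -> f j = g j) ->
  (nsum f n + g i = nsum g n + f i)%nat.
Proof.
  induction n; intros Hi H; [lia|]. simpl. destruct (Nat.eq_dec i n) as [->|Hne].
  - rewrite (nsum_ext f g n) by (intros; apply H; lia). lia.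
  - rewrite H by lia. assert (IH := IHn ltac:(lia) (fun j Hj Hne' => H j ltac:(lia) Hne')). lia.
Qed.

Lemma nsum_zero f n : nsum f n = 0%nat -> forall j, (j < n)%nat -> f j = 0%nat.
Proof. induction n; intros H j Hj; [lia|]. simpl in H. destruct (Nat.eq_dec j n); [subst; lia|].
  apply IHn; lia. Qed.

Lemma nsum_pos f n : (0 < nsum f n)%nat -> exists j, (j < n)%nat /\ (1 <= f j)%nat.
Proof. induction n; intros H; simpl in H; [lia|].
  destruct (f n) eqn:E. - destruct IHn as [j [? ?]]; [lia|]. exists j; split; auto.
  - exists n; split; lia. Qed.

Lemma nsum_lt f g n : (forall j, (j < n)%nat -> (f j <= g j)%nat) -> (nsum f n < nsum g n)%nat ->
  exists j, (j < n)%nat /\ (f j < g j)%nat.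
Proof.
  induction n; intros H1 H2; simpl in H2; [lia|].
  destruct (Nat.lt_ge_cases (f n) (g n)).
  - exists n; split; auto.
  - assert (Hfn := H1 n ltac:(lia)). destruct IHn as [j [? ?]]; auto; [lia|]. exists j; split; auto.
Qed.

Lemma nsum_le_eq f g n : (forall j, (j < n)%nat -> (f j <= g j)%nat) -> nsum f n = nsum g n ->
  forall j, (j < n)%nat -> f j = g j.
Proof.
  induction n; intros H1 H2 j Hj; [lia|]. simpl in H2.
  assert (nsum f n <= nsum g n)%nat.
  { clear -H1. induction n; simpl; auto. assert (H1' := H1 n ltac:(lia)).
    assert (nsum f n <= nsum g n)%nat by (apply IHn; intros; apply H1; lia). lia. }
  assert (Hn := H1 n ltac:(lia)).
  destruct (Nat.eq_dec j n); [subst; lia|]. apply IHn; auto; lia.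
Qed.

Lemma length_upd f i s : length (upd f i s) = length s.
Proof. revert i; induction s; intros [|i]; simpl; auto. Qed.

Lemma nth_upd f i s j : (i < length s)%nat ->
  nth j (upd f i s) O = if Nat.eqb j i then f (nth i s O) else nth j s O.
Proof.
  revert i j; induction s; intros i j Hi; simpl in Hi; [lia|].
  destruct i, j; simpl; auto. apply IHs; lia.
Qed.

Definition Xv (s : state) (j : nat) : R := INR (nth j s O).
Definition AX (le : nat -> nat -> R) n s i := rsum (fun j => le i j * Xv s j) n.
Definition Vq le n s := rsum (fun i => Xv s i * AX le n s i) n.
Definition sumX n s := rsum (Xv s) n.

Definition LeOK (le : nat -> nat -> R) n :=
  (forall i j, (i < n)%nat -> (j < n)%nat -> 0 <= le i j <= 1) /\
  (forall i, (i < n)%nat -> le i i = 1) /\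
  (forall i j, (i < n)%nat -> (j < n)%nat -> le i j = le j i) /\
  (forall i, (i < n)%nat -> rsum (fun j => le i j) n = rsum (fun k => le k O) n).

Lemma Xv_nonneg s j : 0 <= Xv s j.
Proof. apply pos_INR. Qed.

Lemma Xv_upd f i s d j : (i < length s)%nat -> INR (f (nth i s O)) = INR (nth i s O) + d ->
  Xv (upd f i s) j = Xv s j + (if Nat.eqb j i then 1 else 0) * d.
Proof.
  intros Hi Hf. unfold Xv. rewrite nth_upd by auto. destruct (Nat.eqb_spec j i); subst; lra.
Qed.

Lemma V_upd le n f i s d : LeOK le n -> length s = n -> (i < n)%nat ->
  INR (f (nth i s O)) = INR (nth i s O) + d ->
  Vq le n (upd f i s) = Vq le n s + 2 * d * AX le n s i + d * d.
Proof.
  intros [H01 [Hd [Hs Hr]]] Hl Hi Hf.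
  assert (HX : forall j, Xv (upd f i s) j = Xv s j + (if Nat.eqb j i then 1 else 0) * d)
    by (intros; apply Xv_upd; auto; lia).
  assert (HA : forall k, AX le n (upd f i s) k = AX le n s k + d * le k i).
  { intros k. unfold AX. rewrite (rsum_ext _ (fun j => le k j * Xv s j +
        d * ((if Nat.eqb j i then 1 else 0) * le k j))) by (intros; rewrite HX; lra).
    rewrite rsum_plus, rsum_scal, rsum_delta_mul by auto. lra. }
  unfold Vq.
  rewrite (rsum_ext _ (fun k => Xv s k * AX le n s k + (d * (le i k * Xv s k) +
     ((if Nat.eqb k i then 1 else 0) * (d * AX le n s k + d * d * le k i))))).
  2:{ intros k Hk. rewrite HX, HA. rewrite (Hs k i) by auto. lra. }
  rewrite !rsum_plus, rsum_scal, rsum_delta_mul by auto.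
  rewrite Hd by auto. change (rsum (fun k => le i k * Xv s k) n) with (AX le n s i). lra.
Qed.

Lemma ln_le_u u : 0 <= u -> ln (1 + u) <= u.
Proof.
  intros Hu. rewrite <- (ln_exp u) at 2.
  destruct (Rle_lt_or_eq_dec _ _ (exp_ineq1_le u)) as [H|H].
  - left; apply ln_increasing; lra.
  - rewrite H; lra.
Qed.

Lemma ln_ge_u u : 0 <= u -> u / (1 + u) <= ln (1 + u).
Proof.
  intros Hu.
  assert (H := exp_ineq1_le (- (u / (1 + u)))).
  replace (1 + - (u / (1 + u))) with (/ (1 + u)) in H by (field; lra).
  assert (H2 : ln (/ (1 + u)) <= - (u / (1 + u))).
  { rewrite <- (ln_exp (- (u / (1 + u)))).
    destruct (Rle_lt_or_eq_dec _ _ H) as [H'|H'].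
    - left; apply ln_increasing; auto. apply Rinv_0_lt_compat; lra.
    - rewrite H'; lra. }
  rewrite ln_Rinv in H2 by lra. lra.
Qed.

Lemma interf_eq le n i s : LeOK le n -> (i < n)%nat -> interf le n i s = AX le n s i - 1.
Proof.
  intros HL Hi. destruct HL as [_ [Hd _]]. unfold interf, AX.
  rewrite (rsum_ext _ (fun j => le i j * Xv s j + (-1) * ((if Nat.eqb j i then 1 else 0) * le i j)))
    by (intros j Hj; unfold Xv; destruct (Nat.eqb j i); lra).
  rewrite rsum_plus, rsum_scal, rsum_delta_mul by auto. rewrite Hd by auto. lra.
Qed.

Lemma AX_ge le n s i : LeOK le n -> (i < n)%nat -> Xv s i <= AX le n s i.
Proof.
  intros HL Hi. pose proof HL as [H01 [Hd _]].
  apply Rle_trans with (rsum (fun j => (if Nat.eqb j i then 1 else 0) * (le i j * Xv s j)) n).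
  - rewrite rsum_delta_mul by auto. rewrite Hd by auto. lra.
  - apply rsum_le. intros j Hj. assert (H1 := H01 i j Hi Hj). assert (H2 := Xv_nonneg s j).
    destruct (Nat.eqb j i); nra.
Qed.

Lemma AX_le le n s i : LeOK le n -> (i < n)%nat -> AX le n s i <= sumX n s.
Proof.
  intros HL Hi. pose proof HL as [H01 _]. unfold AX, sumX. apply rsum_le. intros j Hj.
  assert (H1 := H01 i j Hi Hj). assert (H2 := Xv_nonneg s j). nra.
Qed.

Lemma AX_nonneg le n s i : LeOK le n -> (i < n)%nat -> 0 <= AX le n s i.
Proof. intros HL Hi. eapply Rle_trans; [apply Xv_nonneg|apply AX_ge; eauto]. Qed.

Lemma ln2_pos : 0 < ln 2.
Proof. assert (H := ln_lt_2). lra. Qed.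

Lemma dr_eq C L N0 le n i s : 0 < L -> LeOK le n -> (i < n)%nat ->
  death_rate C L N0 le n i s = C / (L * ln 2) * Xv s i * ln (1 + 1 / (N0 + (AX le n s i - 1))).
Proof.
  intros HL HO Hi. unfold death_rate, log2. rewrite interf_eq by auto. unfold Xv.
  assert (H := ln2_pos). field. split; lra.
Qed.

Lemma Xv_cases s i : Xv s i = 0 \/ 1 <= Xv s i.
Proof. unfold Xv. destruct (nth i s O) as [|k]; [left; reflexivity|right].
  rewrite S_INR. assert (H := pos_INR k). lra. Qed.

Lemma dr_bounds C L N0 le n i s : 0 < C -> 0 < L -> 0 < N0 -> LeOK le n -> (i < n)%nat ->
  0 <= death_rate C L N0 le n i s <= C / (L * ln 2) * (1 + 1 / N0) /\
  (1 <= Xv s i -> C / (L * ln 2) * Xv s i / (N0 + AX le n s i) <= death_rate C L N0 le n i s).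
Proof.
  intros HC HL HN HO Hi. rewrite dr_eq by auto.
  set (c := C / (L * ln 2)).
  assert (Hc : 0 < c) by (unfold c; assert (H := ln2_pos); apply Rdiv_lt_0_compat; nra).
  destruct (Xv_cases s i) as [H0|H1].
  - rewrite H0. split; [|lra]. split; [lra|]. assert (0 < 1/N0) by (apply Rdiv_lt_0_compat; lra). nra.
  - assert (HA := AX_ge le n s i HO Hi).
    set (A := AX le n s i) in *. set (X := Xv s i) in *.
    set (D0 := N0 + (A - 1)).
    assert (HD0 : N0 <= D0) by (unfold D0; lra).
    assert (Hu : 0 < 1 / D0) by (apply Rdiv_lt_0_compat; lra).
    assert (Hup := ln_le_u (1 / D0) ltac:(lra)).
    assert (Hlo := ln_ge_u (1 / D0) ltac:(lra)).
    assert (Heq : 1 / D0 / (1 + 1 / D0) = 1 / (N0 + A)) by (unfold D0; field; lra).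
    rewrite Heq in Hlo.
    assert (Hlnpos : 0 <= ln (1 + 1 / D0)).
    { eapply Rle_trans; [|apply Hlo]. left; apply Rdiv_lt_0_compat; lra. }
    split; [split|].
    + apply Rmult_le_pos; [|auto]. apply Rmult_le_pos; lra.
    + apply Rle_trans with (c * X * (1 / D0)).
      * apply Rmult_le_compat_l; auto. apply Rmult_le_pos; lra.
      * assert (X * (1 / D0) <= 1 + 1 / N0).
        { unfold Rdiv. rewrite Rmult_1_l, Rmult_1_l.
          apply Rmult_le_reg_r with D0; [lra|]. rewrite Rmult_assoc, Rinv_l by lra.
          rewrite Rmult_plus_distr_r.
          assert (1 <= / N0 * D0).
          { apply Rmult_le_reg_l with N0; [lra|]. rewrite <- Rmult_assoc, Rinv_r by lra. lra. }
          unfold D0 in *. lra. }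
        rewrite Rmult_assoc. apply Rmult_le_compat_l; lra.
    + intros _. replace (c * X / (N0 + A)) with (c * X * (1 / (N0 + A))) by (field; lra).
      apply Rmult_le_compat_l; [nra|]. lra.
Qed.

Lemma ls_app g l1 l2 : ls g (l1 ++ l2) = ls g l1 + ls g l2.
Proof. induction l1; unfold ls in *; simpl; [lra|]. rewrite IHl1. lra. Qed.

Lemma ls_flat_map {A} g (h : A -> list (R * state)) l :
  ls g (flat_map h l) = fold_right Rplus 0 (map (fun i => ls g (h i)) l).
Proof. induction l; simpl; [reflexivity|]. rewrite ls_app, IHl. reflexivity. Qed.

Lemma ls_moves lam eps C L N0 le n g s :
  ls g (moves lam eps C L N0 le n s) =
  rsum (fun i => g (lam * eps ^ 2, upd S i s) + g (death_rate C L N0 le n i s, upd Nat.pred i s)) n.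
Proof.
  unfold moves. rewrite ls_flat_map. unfold rsum. f_equal. apply map_ext. intros i.
  unfold ls; simpl. lra.
Qed.

Lemma in_moves lam eps C L N0 le n s p : In p (moves lam eps C L N0 le n s) ->
  exists i, (i < n)%nat /\ (p = (lam * eps ^ 2, upd S i s) \/ p = (death_rate C L N0 le n i s, upd Nat.pred i s)).
Proof.
  unfold moves. rewrite in_flat_map. intros [i [Hi Hp]]. apply in_seq in Hi.
  exists i; split; [lia|]. simpl in Hp. destruct Hp as [E|[E|[]]]; auto.
Qed.

Lemma moves_birth lam eps C L N0 le n s i : (i < n)%nat ->
  In (lam * eps ^ 2, upd S i s) (moves lam eps C L N0 le n s).
Proof. intros Hi. unfold moves. apply in_flat_map. exists i. split; [apply in_seq; lia|left; auto]. Qed.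

Lemma moves_death lam eps C L N0 le n s i : (i < n)%nat ->
  In (death_rate C L N0 le n i s, upd Nat.pred i s) (moves lam eps C L N0 le n s).
Proof. intros Hi. unfold moves. apply in_flat_map. exists i. split; [apply in_seq; lia|right; left; auto]. Qed.

Section Chain.
Variables (lam eps C L N0 : R) (le : nat -> nat -> R) (n : nat).
Hypotheses (Hlam : 0 < lam) (Heps : 0 < eps) (HC : 0 < C) (HL : 0 < L) (HN : 0 < N0)
  (Hn : (1 <= n)%nat) (HO : LeOK le n).

Let mv := moves lam eps C L N0 le n.
Let b := lam * eps ^ 2.
Let c := C / (L * ln 2).
Let dmax := c * (1 + 1 / N0).

Lemma b_pos : 0 < b.
Proof. unfold b. apply Rmult_lt_0_compat; auto. apply pow_lt; auto. Qed.

Lemma c_pos : 0 < c.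
Proof. unfold c. assert (H := ln2_pos). apply Rdiv_lt_0_compat; nra. Qed.

Lemma dr_nn i s : (i < n)%nat -> 0 <= death_rate C L N0 le n i s <= dmax.
Proof. intros Hi. apply (dr_bounds C L N0 le n i s); auto. Qed.

Lemma qtot_eq s : qtot mv s = rsum (fun i => b + death_rate C L N0 le n i s) n.
Proof. rewrite qtot_ls. unfold mv. rewrite ls_moves. reflexivity. Qed.

Lemma qtot_lo s : b <= qtot mv s.
Proof.
  rewrite qtot_eq. apply Rle_trans with (rsum (fun _ => b) n).
  - rewrite rsum_const. assert (1 <= INR n) by (apply (le_INR 1); auto). assert (Hb := b_pos). nra.
  - apply rsum_le. intros i Hi. assert (H := dr_nn i s Hi). lra.
Qed.

Lemma qtot_hi s : qtot mv s <= INR n * (b + dmax).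
Proof.
  rewrite qtot_eq, <- rsum_const. apply rsum_le. intros i Hi. assert (H := dr_nn i s Hi). lra.
Qed.

Lemma ratesOK : RatesOK mv.
Proof.
  split.
  - intros s p Hp. destruct (in_moves _ _ _ _ _ _ _ _ _ Hp) as [i [Hi [->| ->]]]; simpl.
    + left; apply b_pos.
    + apply dr_nn; auto.
  - intros s. assert (H := qtot_lo s). assert (H' := b_pos). lra.
Qed.

Lemma len_pres s p : length s = n -> In p (mv s) -> length (snd p) = n.
Proof.
  intros Hs Hp. destruct (in_moves _ _ _ _ _ _ _ _ _ Hp) as [i [Hi [->| ->]]]; simpl;
  rewrite length_upd; auto.
Qed.

Let Ssum := rsum (fun k => le k O) n.

Lemma sumAX y : rsum (AX le n y) n = Ssum * sumX n y.
Proof.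
  pose proof HO as [H01 [Hd [Hs Hr]]].
  unfold AX, sumX. rewrite rsum_swap.
  rewrite (rsum_ext _ (fun j => Ssum * Xv y j)).
  - apply rsum_scal.
  - intros j Hj. rewrite (rsum_ext _ (fun i => Xv y j * le j i)).
    + rewrite rsum_scal. unfold Ssum. rewrite Hr by auto. lra.
    + intros i Hi. rewrite Hs by auto. lra.
Qed.

Lemma per_i y i : length y = n -> (i < n)%nat ->
  b * Vq le n (upd S i y) + death_rate C L N0 le n i y * Vq le n (upd Nat.pred i y) <=
  (b + death_rate C L N0 le n i y) * Vq le n y +
  (2 * b * AX le n y i + b + dmax + 2 * c * N0 - 2 * c * Xv y i).
Proof.
  intros Hy Hi.
  assert (HVS : Vq le n (upd S i y) = Vq le n y + 2 * 1 * AX le n y i + 1 * 1).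
  { apply V_upd; auto. rewrite S_INR. lra. }
  assert (Hb := b_pos). assert (Hc := c_pos).
  assert (Hdm : 0 <= dmax) by (unfold dmax; assert (0 < 1 / N0) by (apply Rdiv_lt_0_compat; lra); nra).
  assert (HA := AX_ge le n y i HO Hi). assert (HA0 := AX_nonneg le n y i HO Hi).
  destruct (dr_bounds C L N0 le n i y HC HL HN HO Hi) as [Hdr Hlo].
  fold c in Hlo. fold c dmax in Hdr.
  destruct (Xv_cases y i) as [H0|H1].
  - assert (Hd0 : death_rate C L N0 le n i y = 0).
    { rewrite dr_eq by auto. rewrite H0. lra. }
    rewrite Hd0, HVS, H0. nra.
  - assert (HVP : Vq le n (upd Nat.pred i y) = Vq le n y + 2 * (-1) * AX le n y i + (-1) * (-1)).
    { apply V_upd; auto. unfold Xv in H1. destruct (nth i y O) as [|k].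
      - change (INR 0) with 0 in H1. lra.
      - change (Nat.pred (S k)) with k. rewrite S_INR. lra. }
    rewrite HVS, HVP.
    specialize (Hlo H1).
    set (A := AX le n y i) in *. set (X := Xv y i) in *. set (dr := death_rate C L N0 le n i y) in *.
    assert (Hkey : c * (X - N0) <= dr * A).
    { apply Rle_trans with (c * X / (N0 + A) * A); [|apply Rmult_le_compat_r; auto].
      replace (c * X / (N0 + A) * A) with (c * (X * A / (N0 + A))) by (field; lra).
      apply Rmult_le_compat_l; [lra|].
      apply Rmult_le_reg_r with (N0 + A); [lra|]. unfold Rdiv.
      rewrite Rmult_assoc, Rinv_l by lra. nra. }
    nra.
Qed.

Lemma PV_bound x y : length y = n -> state_eqb y x = false ->
  Pk mv x (Vq le n) y <= Vq le n y +
    (2 * (b * Ssum - c) * sumX n y + INR n * (b + dmax + 2 * c * N0)) / qtot mv y.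
Proof.
  intros Hy E. unfold Pk. rewrite E.
  assert (Hq := qtot_lo y). assert (Hb := b_pos).
  rewrite (ls_ext _ (fun p => / qtot mv y * (fst p * Vq le n (snd p)))) by (intros; unfold Rdiv; lra).
  rewrite ls_scal.
  assert (Hs := rsum_le _ _ n (fun i Hi => per_i y i Hy Hi)).
  assert (E1 : rsum (fun i => (b + death_rate C L N0 le n i y) * Vq le n y +
       (2 * b * AX le n y i + b + dmax + 2 * c * N0 - 2 * c * Xv y i)) n =
       Vq le n y * qtot mv y + (2 * (b * Ssum - c) * sumX n y + INR n * (b + dmax + 2 * c * N0))).
  { rewrite (rsum_ext _ (fun i => Vq le n y * (b + death_rate C L N0 le n i y) +
        (2 * b * AX le n y i + ((b + dmax + 2 * c * N0) + (-2 * c) * Xv y i)))) by (intros; lra).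
    rewrite rsum_plus.
    rewrite (rsum_scal (Vq le n y) (fun i => b + death_rate C L N0 le n i y)).
    rewrite (rsum_plus (fun i => 2 * b * AX le n y i)).
    rewrite (rsum_scal (2 * b) (AX le n y)).
    rewrite (rsum_plus (fun _ => b + dmax + 2 * c * N0)).
    rewrite rsum_const, (rsum_scal (-2 * c) (Xv y)), sumAX.
    rewrite qtot_eq. unfold sumX. lra. }
  assert (E2 : ls (fun p => fst p * Vq le n (snd p)) (mv y) =
     rsum (fun i => b * Vq le n (upd S i y) + death_rate C L N0 le n i y * Vq le n (upd Nat.pred i y)) n).
  { unfold mv. rewrite ls_moves. reflexivity. }
  rewrite E2. rewrite E1 in Hs.
  assert (Hqp : 0 < qtot mv y) by lra.
  apply Rmult_le_reg_l with (qtot mv y); auto.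
  rewrite <- Rmult_assoc, Rinv_r by lra. rewrite Rmult_1_l.
  replace (qtot mv y * (Vq le n y + (2 * (b * Ssum - c) * sumX n y + INR n * (b + dmax + 2 * c * N0)) / qtot mv y))
    with (Vq le n y * qtot mv y + (2 * (b * Ssum - c) * sumX n y + INR n * (b + dmax + 2 * c * N0))) by (field; lra).
  lra.
Qed.

Definition natsum (s : state) := nsum (fun j => nth j s O) n.

Lemma sumX_nat s : sumX n s = INR (natsum s).
Proof. unfold sumX, natsum, Xv. apply rsum_nsum. Qed.

Lemma natsum_birth s i : length s = n -> (i < n)%nat -> natsum (upd S i s) = S (natsum s).
Proof.
  intros Hs Hi. unfold natsum.
  assert (H := nsum_delta (fun j => nth j (upd S i s) O) (fun j => nth j s O) i n Hi).
  simpl in H. rewrite nth_upd in H by lia. rewrite Nat.eqb_refl in H.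
  assert (H' : forall j, (j < n)%nat -> j <> i -> nth j (upd S i s) O = nth j s O).
  { intros j Hj Hne. rewrite nth_upd by lia. destruct (Nat.eqb_spec j i); [lia|auto]. }
  specialize (H H'). lia.
Qed.

Lemma natsum_death s i : length s = n -> (i < n)%nat -> (1 <= nth i s O)%nat ->
  S (natsum (upd Nat.pred i s)) = natsum s.
Proof.
  intros Hs Hi H1. unfold natsum.
  assert (H := nsum_delta (fun j => nth j (upd Nat.pred i s) O) (fun j => nth j s O) i n Hi).
  simpl in H. rewrite nth_upd in H by lia. rewrite Nat.eqb_refl in H.
  assert (H' : forall j, (j < n)%nat -> j <> i -> nth j (upd Nat.pred i s) O = nth j s O).
  { intros j Hj Hne. rewrite nth_upd by lia. destruct (Nat.eqb_spec j i); [lia|auto]. }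
  specialize (H H'). lia.
Qed.

Let Qmax := INR n * (b + dmax).

Lemma dmax_nn : 0 <= dmax.
Proof. unfold dmax. assert (0 < 1 / N0) by (apply Rdiv_lt_0_compat; lra). assert (Hcp := c_pos). nra. Qed.

Lemma Qmax_ge_b : b <= Qmax.
Proof. unfold Qmax. assert (1 <= INR n) by (apply (le_INR 1); auto).
  assert (Hq1 := b_pos). assert (H' := dmax_nn). nra. Qed.

Definition delta (Rn : nat) := Rmin b (c / (N0 + INR Rn)) / Qmax.

Lemma delta_bounds Rn : 0 < delta Rn <= 1.
Proof.
  unfold delta. assert (Hb := b_pos). assert (HQ := Qmax_ge_b). assert (Hc := c_pos).
  assert (H0 : 0 < c / (N0 + INR Rn)) by (apply Rdiv_lt_0_compat; [auto|assert (Hq2 := pos_INR Rn); lra]).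
  assert (Hm1 := Rmin_l b (c / (N0 + INR Rn))).
  assert (Hm2 : 0 < Rmin b (c / (N0 + INR Rn))) by (apply Rmin_glb_lt; auto).
  split.
  - apply Rdiv_lt_0_compat; lra.
  - apply Rmult_le_reg_r with Qmax; [lra|]. unfold Rdiv. rewrite Rmult_assoc, Rinv_l by lra. lra.
Qed.

Lemma prob_ge (r : R) s Rn : Rmin b (c / (N0 + INR Rn)) <= r -> delta Rn <= r / qtot mv s.
Proof.
  intros H. unfold delta. assert (Hq := qtot_lo s). assert (Hq2 := qtot_hi s). fold Qmax in Hq2.
  assert (Hb := b_pos). assert (Hc := c_pos).
  assert (H0 : 0 < c / (N0 + INR Rn)) by (apply Rdiv_lt_0_compat; [auto|assert (H' := pos_INR Rn); lra]).
  assert (Hm2 : 0 < Rmin b (c / (N0 + INR Rn))) by (apply Rmin_glb_lt; auto).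
  unfold Rdiv. apply Rle_trans with (r * / Qmax).
  - apply Rmult_le_compat_r; auto. left; apply Rinv_0_lt_compat; lra.
  - apply Rmult_le_compat_l; [lra|]. apply Rinv_le_contravar; lra.
Qed.

Lemma L_up x Rn : length x = n -> forall k y, length y = n ->
  (forall j, (j < n)%nat -> (nth j y O <= nth j x O)%nat) -> natsum x = (natsum y + k)%nat ->
  preach mv (delta Rn) k y x.
Proof.
  intros Hx. induction k; intros y Hy Hle Hsum.
  - assert (y = x).
    { apply nth_ext with O O; [lia|]. intros j Hj.
      apply (nsum_le_eq (fun j => nth j y O) (fun j => nth j x O) n); auto; [|lia].
      unfold natsum in Hsum. lia. }
    subst; constructor.
  - destruct (nsum_lt (fun j => nth j y O) (fun j => nth j x O) n Hle) as [j [Hj Hlt]].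
    { unfold natsum in Hsum. lia. }
    apply prS with (upd S j y) b.
    + apply moves_birth; auto.
    + apply prob_ge. apply Rmin_l.
    + apply IHk.
      * rewrite length_upd; auto.
      * intros j' Hj'. rewrite nth_upd by lia. destruct (Nat.eqb_spec j' j); subst; auto.
      * rewrite natsum_birth by auto. lia.
Qed.

Lemma L_down x Rn : length x = n -> forall k y, length y = n -> natsum y = k -> (k <= Rn)%nat ->
  preach mv (delta Rn) (k + natsum x) y x.
Proof.
  intros Hx. induction k; intros y Hy Hsum HR.
  - apply L_up; auto.
    + intros j Hj. rewrite (nsum_zero (fun j => nth j y O) n Hsum j Hj). lia.
    + lia.
  - destruct (nsum_pos (fun j => nth j y O) n) as [j [Hj H1]]. { unfold natsum in Hsum; lia. }
    simpl. apply prS with (upd Nat.pred j y) (death_rate C L N0 le n j y).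
    + apply moves_death; auto.
    + apply prob_ge. apply Rle_trans with (c / (N0 + INR Rn)); [apply Rmin_r|].
      destruct (dr_bounds C L N0 le n j y HC HL HN HO Hj) as [_ Hlo]. fold c in Hlo.
      assert (HX : 1 <= Xv y j).
      { unfold Xv. apply (le_INR 1) in H1. simpl in H1. lra. }
      specialize (Hlo HX). eapply Rle_trans; [|apply Hlo].
      assert (HA := AX_le le n y j HO Hj). rewrite sumX_nat in HA.
      assert (HRn : INR (natsum y) <= INR Rn) by (apply le_INR; lia).
      assert (HA0 := AX_nonneg le n y j HO Hj). assert (Hc := c_pos).
      unfold Rdiv. rewrite Rmult_assoc. rewrite <- (Rmult_1_r c) at 1. rewrite Rmult_assoc.
      apply Rmult_le_compat_l; [lra|]. rewrite Rmult_1_l.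
      apply Rle_trans with (1 * / (N0 + AX le n y j)).
      * rewrite !Rmult_1_l. apply Rinv_le_contravar; lra.
      * apply Rmult_le_compat_r; [left; apply Rinv_0_lt_compat; lra|lra].
    + apply IHk.
      * rewrite length_upd; auto.
      * assert (Hq3 := natsum_death y j Hy Hj H1). lia.
      * lia.
Qed.

Lemma Vq_nonneg y : 0 <= Vq le n y.
Proof. unfold Vq. apply rsum_nonneg. intros i Hi. apply Rmult_le_pos; [apply Xv_nonneg|apply AX_nonneg; auto]. Qed.

Lemma pow_anti d a e : 0 <= d <= 1 -> d ^ (a + e) <= d ^ a.
Proof. intros H. rewrite pow_add. assert (H1 := pow_le1 d a H). assert (H2 := pow_le1 d e H). nra. Qed.

Theorem chain_ergodic : b * Ssum < c -> ergodic mv n.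
Proof.
  intros Hst. assert (Hb := b_pos). assert (Hc := c_pos). assert (Hdm := dmax_nn).
  assert (HQb := Qmax_ge_b).
  split.
  - intros x y Hx Hy.
    apply (preach_reach mv y (delta (natsum x)) (natsum x + natsum y) x ratesOK).
    + apply delta_bounds.
    + apply L_down; auto.
  - intros x Hx.
    set (K0 := INR n * (b + dmax + 2 * c * N0)).
    assert (HK0 : 0 <= K0).
    { unfold K0. apply Rmult_le_pos; [apply pos_INR|]. assert (0 <= c * N0) by nra. lra. }
    set (Rn0 := Z.to_nat (up ((K0 + Qmax) / (2 * (c - b * Ssum))))).
    assert (HRn0 : (K0 + Qmax) / (2 * (c - b * Ssum)) < INR Rn0 + 1).
    { destruct (archimed ((K0 + Qmax) / (2 * (c - b * Ssum)))) as [Ha Hb'].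
      unfold Rn0. destruct (Z_le_gt_dec 0 (up ((K0 + Qmax) / (2 * (c - b * Ssum))))) as [Hz|Hz].
      - rewrite INR_IZR_INZ, Z2Nat.id by auto. lra.
      - assert (Hz2 : (up ((K0 + Qmax) / (2 * (c - b * Ssum))) < 0)%Z) by lia. apply IZR_lt in Hz2.
        change (IZR 0) with 0 in Hz2.
        replace (Z.to_nat (up ((K0 + Qmax) / (2 * (c - b * Ssum))))) with 0%nat by lia. simpl. lra. }
    set (p0 := delta Rn0 ^ (Rn0 + natsum x)).
    assert (Hp0 : 0 < p0) by (unfold p0; apply pow_lt; apply delta_bounds).
    destruct (build_W mv x n (Vq le n) (fun y => (natsum y <= Rn0)%nat) (K0 / b)
                (Rn0 + natsum x + 1) p0 ratesOK len_pres) as [W [HW1 HW2]].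
    + intros; apply Vq_nonneg.
    + unfold Rdiv; apply Rmult_le_pos; [auto|left; apply Rinv_0_lt_compat; auto].
    + auto.
    + intros y Hy HF E. eapply Rle_trans; [apply PV_bound; auto|].
      assert (Hq1 := qtot_lo y). assert (Hq2 := qtot_hi y). fold Qmax in Hq2.
      assert (Hs : INR Rn0 + 1 <= sumX n y).
      { rewrite sumX_nat. rewrite <- S_INR. apply le_INR. lia. }
      assert (HG : 2 * (b * Ssum - c) * sumX n y + K0 <= - Qmax).
      { assert (Hcb : 0 < 2 * (c - b * Ssum)) by lra.
        assert (K0 + Qmax < 2 * (c - b * Ssum) * sumX n y).
        { assert (Hd : K0 + Qmax = (K0 + Qmax) / (2 * (c - b * Ssum)) * (2 * (c - b * Ssum))) by (field; lra).
          rewrite Hd at 1. set (qq := (K0 + Qmax) / (2 * (c - b * Ssum))) in *. nra. }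
        lra. }
      fold K0.
      assert ((2 * (b * Ssum - c) * sumX n y + K0) / qtot mv y <= -1).
      { apply Rmult_le_reg_r with (qtot mv y); [lra|]. unfold Rdiv. rewrite Rmult_assoc, Rinv_l by lra. lra. }
      lra.
    + intros y Hy HF E. eapply Rle_trans; [apply PV_bound; auto|].
      assert (Hq1 := qtot_lo y).
      assert (Hs : 0 <= sumX n y) by (unfold sumX; apply rsum_nonneg; intros; apply Xv_nonneg).
      fold K0.
      assert (HG : 2 * (b * Ssum - c) * sumX n y + K0 <= K0) by nra.
      assert ((2 * (b * Ssum - c) * sumX n y + K0) / qtot mv y <= K0 / b).
      { apply Rle_trans with (K0 / qtot mv y).
        - unfold Rdiv. apply Rmult_le_compat_r; [left; apply Rinv_0_lt_compat; lra|lra].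
        - unfold Rdiv. apply Rmult_le_compat_l; auto. apply Rinv_le_contravar; lra. }
      lra.
    + intros y Hy HF E.
      assert (Hpr := L_down x Rn0 Hx (natsum y) y Hy eq_refl HF).
      assert (HU := preach_U mv x (delta Rn0) _ _ ratesOK ltac:(split; [left|]; apply delta_bounds) Hpr
                      (Rn0 + natsum x + 1) ltac:(lia)).
      unfold p0.
      assert (Hd := delta_bounds Rn0).
      assert (Hpa : delta Rn0 ^ (Rn0 + natsum x) <= delta Rn0 ^ (natsum y + natsum x)).
      { replace (Rn0 + natsum x)%nat with ((natsum y + natsum x) + (Rn0 - natsum y))%nat by lia.
        apply pow_anti; lra. }
      lra.
    + apply (abstract_pr mv x n W b ratesOK Hb qtot_lo len_pres HW1 HW2 Hx).
Qed.

End Chain.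

Lemma Int_part_shift x k : Int_part (x + IZR k) = (Int_part x + k)%Z.
Proof.
  symmetry. apply Int_part_spec. destruct (base_Int_part x) as [H1 H2].
  rewrite plus_IZR. lra.
Qed.

Lemma cd_periodic Q t k : 0 < Q -> circ_dist Q (t + 2 * Q * IZR k) = circ_dist Q t.
Proof.
  intros HQ. unfold circ_dist.
  replace ((t + 2 * Q * IZR k) / (2 * Q)) with (t / (2 * Q) + IZR k) by (field; lra).
  rewrite Int_part_shift, plus_IZR.
  replace (t / (2 * Q) + IZR k - (IZR (Int_part (t / (2 * Q))) + IZR k))
    with (t / (2 * Q) - IZR (Int_part (t / (2 * Q)))) by ring. reflexivity.
Qed.

Lemma cd_even Q t : 0 < Q -> circ_dist Q (- t) = circ_dist Q t.
Proof.
  intros HQ. unfold circ_dist.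
  replace (- t / (2 * Q)) with (- (t / (2 * Q))) by (field; lra).
  set (x := t / (2 * Q)). destruct (base_Int_part x) as [H1 H2].
  set (z := Int_part x) in *.
  destruct (Req_dec (IZR z) x) as [Heq|Hne].
  - assert (Hz : Int_part (- x) = (- z)%Z) by (symmetry; apply Int_part_spec; rewrite opp_IZR; lra).
    rewrite Hz, opp_IZR. replace (- x - - IZR z) with 0 by lra. replace (x - IZR z) with 0 by lra. reflexivity.
  - assert (Hz : Int_part (- x) = (- z - 1)%Z)
      by (symmetry; apply Int_part_spec; rewrite minus_IZR, opp_IZR; simpl; lra).
    rewrite Hz, minus_IZR, opp_IZR. simpl IZR.
    replace (- x - (- IZR z - 1)) with (1 - (x - IZR z)) by ring.
    replace (1 - (1 - (x - IZR z))) with (x - IZR z) by ring.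
    rewrite Rmin_comm. reflexivity.
Qed.

Lemma cd_zero Q : circ_dist Q 0 = 0.
Proof.
  unfold circ_dist. replace (0 / (2 * Q)) with 0 by (unfold Rdiv; ring).
  assert (Hz : Int_part 0 = 0%Z) by (symmetry; apply Int_part_spec; simpl; lra).
  rewrite Hz. simpl. replace (0 - 0) with 0 by ring. rewrite Rmin_left by lra. ring.
Qed.

Lemma td_nonneg Q b b' : 0 <= torus_dist Q b b'.
Proof. apply sqrt_pos. Qed.

Lemma td_sym Q b b' : 0 < Q -> torus_dist Q b b' = torus_dist Q b' b.
Proof.
  intros HQ. unfold torus_dist.
  replace (fst b' - fst b) with (- (fst b - fst b')) by ring.
  replace (snd b' - snd b) with (- (snd b - snd b')) by ring.
  rewrite !cd_even by auto. reflexivity.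
Qed.

Lemma td_refl Q b : torus_dist Q b b = 0.
Proof.
  unfold torus_dist. rewrite !Rminus_diag, cd_zero. replace (0 ^ 2 + 0 ^ 2) with 0 by ring. apply sqrt_0.
Qed.

Lemma lub_ext (E1 E2 : R -> Prop) a c : (forall r, E1 r <-> E2 r) -> is_lub E1 a -> is_lub E2 c -> a = c.
Proof.
  intros H [Ha1 Ha2] [Hc1 Hc2]. apply Rle_antisym.
  - apply Ha2. intros r Hr. apply Hc1, H, Hr.
  - apply Hc2. intros r Hr. apply Ha1, H, Hr.
Qed.

Definition cell_pt (eps : R) (m i : nat) := (fst (center eps m i) + 0, snd (center eps m i) + 0).

Lemma cell_pt_in eps m i : 0 < eps -> in_closed_cell eps m i (cell_pt eps m i).
Proof.
  intros He. exists 0, 0. rewrite Rabs_R0. repeat split; try lra.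
Qed.

Definition fs (m a p : nat) : nat := if Nat.leb p a then (a - p)%nat else (a + m - p)%nat.

Lemma fs_lt m a p : (a < m)%nat -> (p < m)%nat -> (fs m a p < m)%nat.
Proof. intros. unfold fs. destruct (Nat.leb_spec p a); lia. Qed.

Lemma fs_inv m a p : (a < m)%nat -> (p < m)%nat -> fs m a (fs m a p) = p.
Proof. intros. unfold fs. destruct (Nat.leb_spec p a); [destruct (Nat.leb_spec (a - p) a)|destruct (Nat.leb_spec (a + m - p) a)]; lia. Qed.

Lemma fs_shift m a p (eps Q : R) : INR m * eps = 2 * Q -> (a < m)%nat -> (p < m)%nat ->
  exists z, INR a * eps - INR p * eps = INR (fs m a p) * eps - 0 + 2 * Q * IZR z.
Proof.
  intros Hm Ha Hp. unfold fs. destruct (Nat.leb_spec p a).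
  - exists 0%Z. rewrite minus_INR by lia. simpl. lra.
  - exists (-1)%Z. rewrite minus_INR, plus_INR by lia. simpl IZR. rewrite <- Hm. lra.
Qed.

Definition sig (m i j : nat) : nat := (fs m (i / m) (j / m) * m + fs m (i mod m) (j mod m))%nat.

Lemma fold_perm l l' : Permutation l l' -> fold_right Rplus 0 l = fold_right Rplus 0 l'.
Proof. intros H; induction H; simpl; try lra. Qed.

Lemma divmod_lt m i : (i < m * m)%nat -> (i / m < m)%nat /\ (i mod m < m)%nat.
Proof.
  intros H. assert (m <> 0%nat) by (intro; subst; lia). split.
  - apply Nat.Div0.div_lt_upper_bound. lia.
  - apply Nat.mod_upper_bound; auto.
Qed.

Lemma sig_props m i j : (i < m * m)%nat -> (j < m * m)%nat ->
  (sig m i j < m * m)%nat /\ (sig m i j / m = fs m (i / m) (j / m))%nat /\ (sig m i j mod m = fs m (i mod m) (j mod m))%nat.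
Proof.
  intros Hi Hj. destruct (divmod_lt m i Hi) as [Hi1 Hi2]. destruct (divmod_lt m j Hj) as [Hj1 Hj2].
  assert (H1 := fs_lt m _ _ Hi1 Hj1). assert (H2 := fs_lt m _ _ Hi2 Hj2).
  unfold sig. split; [nia|split].
  - symmetry. apply Nat.div_unique with (fs m (i mod m) (j mod m)); auto. lia.
  - symmetry. apply Nat.mod_unique with (fs m (i / m) (j / m)); auto. lia.
Qed.

Lemma sig_inj m i j j' : (i < m * m)%nat -> (j < m * m)%nat -> (j' < m * m)%nat ->
  sig m i j = sig m i j' -> j = j'.
Proof.
  intros Hi Hj Hj' E.
  destruct (sig_props m i j Hi Hj) as [_ [A1 A2]]. destruct (sig_props m i j' Hi Hj') as [_ [B1 B2]].
  destruct (divmod_lt m i Hi) as [Hi1 Hi2]. destruct (divmod_lt m j Hj) as [Hj1 Hj2].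
  destruct (divmod_lt m j' Hj') as [Hk1 Hk2].
  rewrite E in A1, A2. rewrite A1 in B1. rewrite A2 in B2.
  assert (j / m = j' / m)%nat by (rewrite <- (fs_inv m (i / m) (j / m)), B1, fs_inv; auto).
  assert (j mod m = j' mod m)%nat by (rewrite <- (fs_inv m (i mod m) (j mod m)), B2, fs_inv; auto).
  assert (m <> 0%nat) by (intro; subst; lia).
  rewrite (Nat.div_mod j m), (Nat.div_mod j' m) by auto. lia.
Qed.

Lemma rsum_sig m i (h : nat -> R) : (i < m * m)%nat ->
  rsum (fun j => h (sig m i j)) (m * m) = rsum h (m * m).
Proof.
  intros Hi. unfold rsum. rewrite <- (map_map (sig m i) h). apply fold_perm. apply Permutation_map.
  apply Permutation_map_same_l.
  - apply NoDup_map_NoDup_ForallPairs; [|apply seq_NoDup].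
    intros a b Ha Hb. apply in_seq in Ha, Hb. apply sig_inj; auto; lia.
  - intros a Ha. apply in_map_iff in Ha. destruct Ha as [j [<- Hj]]. apply in_seq in Hj.
    apply in_seq. destruct (sig_props m i j Hi ltac:(lia)). lia.
Qed.

Section Geo.
Variables (Q eps : R) (m : nat) (l : R -> R) (le : nat -> nat -> R).
Hypotheses (HQ : 0 < Q) (Heps : 0 < eps) (Hm : INR m * eps = 2 * Q)
  (Hl_nonneg : forall r, 0 <= r -> 0 <= l r)
  (Hl_noninc : forall r r', 0 <= r -> r <= r' -> l r' <= l r)
  (Hl0 : l 0 = 1)
  (Hle : forall i j, (i < m * m)%nat -> (j < m * m)%nat -> is_lub (leps_set l Q eps m i j) (le i j)).

Lemma le_01 i j : (i < m * m)%nat -> (j < m * m)%nat -> 0 <= le i j <= 1.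
Proof.
  intros Hi Hj. destruct (Hle i j Hi Hj) as [H1 H2]. split.
  - apply Rle_trans with (l (torus_dist Q (cell_pt eps m i) (cell_pt eps m j))).
    + apply Hl_nonneg, td_nonneg.
    + apply H1. exists (cell_pt eps m i), (cell_pt eps m j). repeat split; try apply cell_pt_in; auto.
  - apply H2. intros r [b [b' [_ [_ ->]]]]. rewrite <- Hl0. apply Hl_noninc; [lra|apply td_nonneg].
Qed.

Lemma le_diag i : (i < m * m)%nat -> le i i = 1.
Proof.
  intros Hi. apply Rle_antisym; [apply le_01; auto|].
  destruct (Hle i i Hi Hi) as [H1 _]. rewrite <- Hl0, <- (td_refl Q (cell_pt eps m i)).
  apply H1. exists (cell_pt eps m i), (cell_pt eps m i). repeat split; try apply cell_pt_in; auto.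
Qed.

Lemma le_sym i j : (i < m * m)%nat -> (j < m * m)%nat -> le i j = le j i.
Proof.
  intros Hi Hj. apply (lub_ext (leps_set l Q eps m i j) (leps_set l Q eps m j i)); auto.
  intros r; split; intros [b [b' [H1 [H2 ->]]]]; exists b', b; repeat split; auto; apply f_equal, td_sym; auto.
Qed.

Lemma le_shift i j k k' z1 z2 : (i < m * m)%nat -> (j < m * m)%nat -> (k < m * m)%nat -> (k' < m * m)%nat ->
  fst (center eps m i) - fst (center eps m j) = fst (center eps m k) - fst (center eps m k') + 2 * Q * IZR z1 ->
  snd (center eps m i) - snd (center eps m j) = snd (center eps m k) - snd (center eps m k') + 2 * Q * IZR z2 ->
  le i j = le k k'.
Proof.
  intros Hi Hj Hk Hk' E1 E2. apply (lub_ext (leps_set l Q eps m i j) (leps_set l Q eps m k k')); auto.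
  intros r; split.
  - intros [b [b' [[u [v [Hu [Hv ->]]]] [[u' [v' [Hu' [Hv' ->]]]] ->]]]].
    exists (fst (center eps m k) + u, snd (center eps m k) + v),
           (fst (center eps m k') + u', snd (center eps m k') + v').
    split; [exists u, v; auto|]. split; [exists u', v'; auto|].
    f_equal. unfold torus_dist. cbn [fst snd].
    replace (fst (center eps m i) + u - (fst (center eps m j) + u'))
      with (fst (center eps m k) + u - (fst (center eps m k') + u') + 2 * Q * IZR z1) by lra.
    replace (snd (center eps m i) + v - (snd (center eps m j) + v'))
      with (snd (center eps m k) + v - (snd (center eps m k') + v') + 2 * Q * IZR z2) by lra.
    rewrite !cd_periodic by auto. reflexivity.
  - intros [b [b' [[u [v [Hu [Hv ->]]]] [[u' [v' [Hu' [Hv' ->]]]] ->]]]].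
    exists (fst (center eps m i) + u, snd (center eps m i) + v),
           (fst (center eps m j) + u', snd (center eps m j) + v').
    split; [exists u, v; auto|]. split; [exists u', v'; auto|].
    f_equal. unfold torus_dist. cbn [fst snd].
    replace (fst (center eps m i) + u - (fst (center eps m j) + u'))
      with (fst (center eps m k) + u - (fst (center eps m k') + u') + 2 * Q * IZR z1) by lra.
    replace (snd (center eps m i) + v - (snd (center eps m j) + v'))
      with (snd (center eps m k) + v - (snd (center eps m k') + v') + 2 * Q * IZR z2) by lra.
    rewrite !cd_periodic by auto. reflexivity.
Qed.

Lemma le_row i : (i < m * m)%nat -> rsum (fun j => le i j) (m * m) = rsum (fun k => le k O) (m * m).
Proof.
  intros Hi. rewrite <- (rsum_sig m i (fun k => le k O) Hi). apply rsum_ext. intros j Hj.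
  destruct (sig_props m i j Hi Hj) as [Hs [A1 A2]].
  destruct (divmod_lt m i Hi) as [Hi1 Hi2]. destruct (divmod_lt m j Hj) as [Hj1 Hj2].
  assert (Hm0 : (0 < m * m)%nat) by lia.
  destruct (fs_shift m (i / m) (j / m) eps Q Hm Hi1 Hj1) as [z1 Hz1].
  destruct (fs_shift m (i mod m) (j mod m) eps Q Hm Hi2 Hj2) as [z2 Hz2].
  apply (le_shift i j (sig m i j) O z1 z2); auto.
  - unfold center; simpl. rewrite A1. rewrite Nat.Div0.div_0_l. simpl. lra.
  - unfold center; simpl. rewrite A2. rewrite Nat.Div0.mod_0_l. simpl. lra.
Qed.

Lemma leOK : LeOK le (m * m).
Proof.
  split; [|split; [|split]].
  - apply le_01.
  - apply le_diag.
  - apply le_sym.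
  - apply le_row.
Qed.

End Geo.

Theorem mainTheorem9
  (Q eps : R) (m : nat) (l : R -> R) (N0 C L lam : R) (le : nat -> nat -> R)
  (HQ : 0 < Q) (Heps : 0 < eps) (Hm : INR m * eps = 2 * Q)
  (Hl_nonneg : forall r, 0 <= r -> 0 <= l r)
  (Hl_bdd : exists B, forall r, 0 <= r -> l r <= B)
  (Hl_noninc : forall r r', 0 <= r -> r <= r' -> l r' <= l r)
  (Hl0 : l 0 = 1)
  (HN0 : 0 < N0) (HC : 0 < C) (HL : 0 < L) (Hlam : 0 < lam)
  (Hle : forall i j, (i < m * m)%nat -> (j < m * m)%nat ->
           is_lub (leps_set l Q eps m i j) (le i j))
  (Hstab : lam < C / (L * ln 2 * eps ^ 2 * rsum (fun k => le k O) (m * m))) :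
  ergodic (moves lam eps C L N0 le (m * m)) (m * m).
Proof.
  assert (HO := leOK Q eps m l le HQ Heps Hm Hl_nonneg Hl_noninc Hl0 Hle).
  assert (Hm1 : (1 <= m * m)%nat).
  { destruct m as [|m']; [simpl in Hm; lra|]. nia. }
  apply chain_ergodic; auto.
  destruct HO as [H01 [Hd [Hs Hr]]].
  set (SS := rsum (fun k => le k O) (m * m)) in *.
  assert (HS : 1 <= SS).
  { rewrite <- (Hr O) by lia.
    apply Rle_trans with (rsum (fun j => (if Nat.eqb j O then 1 else 0) * le O j) (m * m)).
    - rewrite rsum_delta_mul by lia. rewrite Hd by lia. lra.
    - apply rsum_le. intros j Hj. assert (H := H01 O j ltac:(lia) Hj). destruct (Nat.eqb j O); lra. }
  assert (Hl2 := ln2_pos).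
  assert (Hpos : 0 < L * ln 2 * eps ^ 2 * SS).
  { assert (0 < eps ^ 2) by (apply pow_lt; auto).
    repeat apply Rmult_lt_0_compat; lra. }
  apply Rmult_lt_compat_r with (r := L * ln 2 * eps ^ 2 * SS) in Hstab; auto.
  assert (E1 : C / (L * ln 2 * eps ^ 2 * SS) * (L * ln 2 * eps ^ 2 * SS) = C)
    by (field; repeat split; lra).
  rewrite E1 in Hstab.
  apply Rmult_lt_reg_r with (L * ln 2); [nra|].
  assert (E2 : C / (L * ln 2) * (L * ln 2) = C) by (field; split; lra).
  rewrite E2. lra.
Qed.
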